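(* Let $(S,K,I)$ be an active split graph. If $\Phi(S)$ is connected, then $S$ is indecomposable.
   Context: All graphs are finite and simple. A split graph is a graph $S$ whose vertex set is a disjoint union $V(S)=K\,\dot\cup\,I$ with $K$ a clique and $I$ an independent set; $(K,I)$ is called a bipartition of $S$, and $(S,K,I)$ denotes $S$ together with this fixed bipartition. A 2-switch in a graph $G$ is performed on four distinct vertices $a,b,c,d$ with $ab,cd\in E(G)$ and $ac,bd\notin E(G)$: it deletes $ab,cd$ and adds $ac,bd$; $a,b,c,d$ are said to participate in it. A vertex is active in $G$ if it participates in some 2-switch on $G$, otherwise inactive; $act(G)$ is the set of active vertices, and $G$ is active if $act(G)=V(G)$. For a split graph $(S,K,I)$ and distinct $u,v\in I$, $\sigma_{uv}(S)$ is the number of induced subgraphs of $S$ isomorphic to $P_4$ containing both $u$ and $v$. The factor graph $\Phi(S)$ is the loopless multigraph with vertex set $I$ having exactly $\sigma_{uv}(S)$ parallel edges between $u$ and $v$. Graph notions (connected, complete, clique, etc.) applied to $\Phi(S)$ refer to its underlying simple graph, in which $u\sim v$ iff $\sigma_{uv}(S)\ge1$. Tyshkevich composition: for a split graph $(S,K,I)$ and a graph $G$ vertex-disjoint from $S$, $S\circ G$ is the graph with vertex set $V(S)\cup V(G)$ and edge set $E(S)\cup E(G)\cup\{xy: x\in K,\ y\in V(G)\}$. A graph $G$ is decomposable if $G=S\circ H$ for some split graph $S$ and graph $H$, each with at least one vertex; otherwise $G$ is indecomposable. *)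

(* Defs.v *)
From mathcomp Require Import all_boot.
Set Implicit Arguments. Unset Strict Implicit. Unset Printing Implicit Defensive.

Section Graphs.
Variable T : finType.

Definition simple_graph (adj : rel T) : Prop :=
  symmetric adj /\ irreflexive adj.

Definition is_clique (adj : rel T) (K : {set T}) : Prop :=
  forall x y, x \in K -> y \in K -> x != y -> adj x y.

Definition is_independent (adj : rel T) (I : {set T}) : Prop :=
  forall x y, x \in I -> y \in I -> ~~ adj x y.

Definition split_bipartition (adj : rel T) (A K I : {set T}) : Prop :=
  [/\ K :&: I = set0, K :|: I = A, is_clique adj K & is_independent adj I].

Definition two_switch (adj : rel T) (a b c d : T) : Prop :=
  [/\ uniq [:: a; b; c; d], adj a b, adj c d, ~~ adj a c & ~~ adj b d].

Definition active_vertex (adj : rel T) (v : T) : Prop :=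
  exists a b c d, two_switch adj a b c d /\ v \in [:: a; b; c; d].

Definition active_graph (adj : rel T) : Prop := forall v, active_vertex adj v.

Definition induces_P4 (adj : rel T) (W : {set T}) : bool :=
  [exists a, exists b, exists c, exists d,
     [&& uniq [:: a; b; c; d], W == [set a; b; c; d],
         adj a b, adj b c, adj c d,
         ~~ adj a c, ~~ adj a d & ~~ adj b d]].

Definition sigma (adj : rel T) (u v : T) : nat :=
  #|[set W : {set T} | induces_P4 adj W && (u \in W) && (v \in W)]|.

(* underlying simple graph of the factor graph Phi(S), on vertex set I *)
Definition factor_rel (adj : rel T) (I : {set T}) : rel T :=
  fun u v => [&& u \in I, v \in I, u != v & 0 < sigma adj u v].

Definition factor_connected (adj : rel T) (I : {set T}) : Prop :=
  forall u v, u \in I -> v \in I -> connect (factor_rel adj I) u v.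

(* G = S o H with V(S) = A, V(H) = B (both nonempty), S split with
   bipartition (K', I'): K' complete to B, I' anticomplete to B. *)
Definition decomposable (adj : rel T) : Prop :=
  exists (A B K I : {set T}),
    [/\ A != set0, B != set0, A :&: B = set0, A :|: B = setT &
        [/\ split_bipartition adj A K I,
        (forall x y, x \in K -> y \in B -> adj x y) &
        (forall x y, x \in I -> y \in B -> ~~ adj x y)]].

Definition indecomposable (adj : rel T) : Prop := ~ decomposable adj.

End Graphs.

(* Main.v *)
Require Import Defs.
From mathcomp Require Import all_boot.
Set Implicit Arguments. Unset Strict Implicit. Unset Printing Implicit Defensive.

Inductive cls3 := CK | CI | CB.
Definition isB c := if c is CB then true else false.

Definition okc (u v : cls3) (e : bool) : bool :=
  match u, v with
  | CK, CK => e | CI, CI => ~~ e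
  | CK, CB => e | CB, CK => e
  | CI, CB => ~~ e | CB, CI => ~~ e
  | _, _ => true end.

Lemma p4_lemma (T : finType) (adj : rel T) (A B K I : {set T}) :
  symmetric adj -> A :&: B = set0 -> A :|: B = setT -> split_bipartition adj A K I ->
  (forall x y, x \in K -> y \in B -> adj x y) ->
  (forall x y, x \in I -> y \in B -> ~~ adj x y) ->
  forall a b c d, uniq [:: a; b; c; d] -> adj a b -> adj b c -> adj c d ->
  ~~ adj a c -> ~~ adj a d -> ~~ adj b d ->
  [/\ (b \in B) = (a \in B), (c \in B) = (a \in B) & (d \in B) = (a \in B)].
Proof.
move=> sym AB ABT [KI KIA cK iI] comp anti a b c d Hu ab bc cd ac ad bd.
pose cl x := if x \in K then CK else if x \in I then CI else CB.
have inB : forall x, (x \in B) = isB (cl x).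
  move=> x; rewrite /cl; case: ifP => xK.
    apply/negbTE/negP => xB.
    have : x \in A :&: B by rewrite inE -KIA inE xK xB.
    by rewrite AB inE.
  case: ifP => xI.
    apply/negbTE/negP => xB.
    have : x \in A :&: B by rewrite inE -KIA inE xI orbT xB.
    by rewrite AB inE.
  have : x \in A :|: B by rewrite ABT inE.
  by rewrite inE -KIA inE xK xI /= => ->.
have clz : forall z, (cl z = CK /\ z \in K) \/ (cl z = CI /\ z \in I) \/ (cl z = CB /\ z \in B).
  move=> z; rewrite inB /cl; case: ifP => zK; first by left.
  by case: ifP => zI; right; [left|right].
have okxy : forall x y, x != y -> okc (cl x) (cl y) (adj x y).
  move=> x y xy.
  case: (clz x) => [[-> xK]|[[-> xK]|[-> xK]]];
  case: (clz y) => [[-> yK]|[[-> yK]|[-> yK]]] //=.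
  - exact: cK.
  - exact: comp.
  - exact: iI.
  - exact: anti.
  - rewrite sym; exact: comp.
  - rewrite sym; exact: anti.
move: Hu; rewrite /= !inE !negb_or => /and4P[/and3P[nab nac nad] /andP[nbc nbd] ncd _].
have H1 := okxy _ _ nab; have H2 := okxy _ _ nac; have H3 := okxy _ _ nad.
have H4 := okxy _ _ nbc; have H5 := okxy _ _ nbd; have H6 := okxy _ _ ncd.
rewrite ab bc cd (negbTE ac) (negbTE ad) (negbTE bd) in H1 H2 H3 H4 H5 H6.
rewrite !inB; move: H1 H2 H3 H4 H5 H6.
case: (cl a); case: (cl b); case: (cl c); case: (cl d) => //.
Qed.

Definition isP4 (T : finType) (adj : rel T) (p q r s : T) :=
  [/\ uniq [:: p; q; r; s], adj p q, adj q r, adj r s &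
      [/\ ~~ adj p r, ~~ adj p s & ~~ adj q s]].

Lemma in_P4 (T : finType) (adj : rel T) (K I : {set T}) :
  symmetric adj -> split_bipartition adj setT K I -> active_graph adj ->
  forall v, exists p q r s, isP4 adj p q r s /\ v \in [:: p; q; r; s].
Proof.
move=> sym [KI KIT cK iI] act v.
have KoI : forall x, x \in K \/ x \in I.
  move=> x; have : x \in K :|: I by rewrite KIT inE.
  by rewrite inE => /orP.
have nK : forall x y, x != y -> ~~ adj x y -> x \in I \/ y \in I.
  move=> x y xy nxy; case: (KoI x) => xK; last by left.
  case: (KoI y) => yK; last by right.
  by move: nxy; rewrite (cK _ _ xK yK xy).
have nI : forall x y, adj x y -> x \in K \/ y \in K.
  move=> x y xy; case: (KoI x) => xK; first by left.
  case: (KoI y) => yK; first by right.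
  by move: (iI _ _ xK yK); rewrite xy.
case: (act v) => a [b [c [d [[Hu ab cd ac bd] Hv]]]].
move: (Hu); rewrite /= !inE !negb_or => /and4P[/and3P[nab nac nad] /andP[nbc nbd] ncd _].
case ead: (adj a d); case ebc: (adj b c).
- exfalso.
  case: (nK _ _ nac ac) => [aI|cI]; case: (nK _ _ nbd bd) => [bI|dI].
  + by move: (iI _ _ aI bI); rewrite ab.
  + by move: (iI _ _ aI dI); rewrite ead.
  + by move: (iI _ _ cI bI); rewrite sym ebc.
  + by move: (iI _ _ cI dI); rewrite cd.
- exists b, a, d, c; split; last first.
    by move: Hv; rewrite !inE => /or4P[]/eqP->; rewrite eqxx ?orbT.
  split.
  + by rewrite /= !inE !negb_or (eq_sym b a) (eq_sym d c) nab nbd nbc nad nac ncd.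
  + by rewrite sym.
  + by [].
  + by rewrite sym.
  + by split; rewrite ?ebc.
- exists a, b, c, d; split => //; split; rewrite ?ebc ?ead //.
- exfalso.
  have nbc' : a != d by [].
  case: (nI _ _ ab) => [aK|bK]; case: (nI _ _ cd) => [cK'|dK].
  + by move: ac; rewrite (cK _ _ aK cK' nac).
  + by move: ead; rewrite (cK _ _ aK dK nad).
  + by move: ebc; rewrite (cK _ _ bK cK' nbc).
  + by move: bd; rewrite (cK _ _ bK dK nbd).
Qed.

Theorem theorem2p6 (T : finType) (adj : rel T) (K I : {set T}) :
  simple_graph adj ->
  split_bipartition adj setT K I ->
  active_graph adj ->
  factor_connected adj I ->
  indecomposable adj.
Proof.
move=> [sym irr] Hsp act fc [A [B [K' [I' [An0 Bn0 AB ABT [Hs comp anti]]]]]].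
have P4 := p4_lemma sym AB ABT Hs comp anti.
have getI : forall v, exists u, u \in I /\ (u \in B) = (v \in B).
  move=> v; have [p [q [r [s [[Hu pq qr rs [pr ps qs]] Hv]]]]] := in_P4 sym Hsp act v.
  have [Hq Hr Hs'] := P4 _ _ _ _ Hu pq qr rs pr ps qs.
  have vB : (v \in B) = (p \in B) by move: Hv; rewrite !inE => /or4P[]/eqP->.
  case pI: (p \in I); first by exists p; rewrite vB.
  exists r; split; last by rewrite Hr vB.
  case: Hsp => [KI KIT cK iI].
  have KoI : forall x, x \in K \/ x \in I.
    move=> x; have : x \in K :|: I by rewrite KIT inE.
    by rewrite inE => /orP.
  case: (KoI p) => pK; last by rewrite pI in pK.
  case: (KoI r) => rK //.
  move: Hu; rewrite /= !inE !negb_or => /and4P[/and3P[_ npr _] _ _ _].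
  by move: pr; rewrite (cK _ _ pK rK npr).
have clB : forall x y, factor_rel adj I x y -> (x \in B) = (y \in B).
  move=> x y /and4P[_ _ _ /card_gt0P[W]].
  rewrite inE => /andP[/andP[HW xW] yW].
  case/existsP: HW => a /existsP[b /existsP[c /existsP[d]]].
  case/and5P => Hu /eqP WE ab bc /and4P[cd ac ad bd].
  have [Hb Hc Hd] := P4 _ _ _ _ Hu ab bc cd ac ad bd.
  have h : forall z, z \in W -> (z \in B) = (a \in B).
    by move=> z; rewrite WE !inE => /orP[/orP[/orP[]|]|]/eqP->.
  by rewrite (h x xW) (h y yW).
case/set0Pn: Bn0 => v vB.
case/set0Pn: An0 => w wA.
have wB : (w \in B) = false.
  apply/negbTE/negP => wB.
  have : w \in A :&: B by rewrite inE wA wB.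
  by rewrite AB inE.
have [u [uI uB]] := getI v.
have [u' [u'I u'B]] := getI w.
have := closed_connect clB (fc u' u u'I uI).
by rewrite u'B uB vB wB.
Qed.
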